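(* Let $\mathcal{A}\subset\mathbb{Z}^2$ be finite with $\Delta_{\mathcal{A}}$ a polygon, and let $f\colon\mathcal{A}\to\mathbb{R}^2$ be compatible. Then for every $w\in\mathbb{R}^{\mathcal{A}}_{>}$ and every edge $\delta$ of $\Delta_{\mathcal{A}}$, the restriction of the toric Bézier patch $F_w$ to $\delta$ is injective.
   Context: Let $\mathcal{A}\subset\mathbb{Z}^2$ be finite and write $\Delta_{\mathcal{A}}$ for its convex hull, a lattice polygon. Write it via its edge inequalities as $\Delta_{\mathcal{A}}=\{x\in\mathbb{R}^2 : h_i(x)\ge 0,\ i=1,\dots,\ell\}$. Here there is one $h_i$ for each edge, and $h_i(x,y)=a_ix+b_iy+c_i$ with integers $a_i,b_i,c_i$ and $\gcd(a_i,b_i)=1$. For $\mathbf{a}\in\mathcal{A}$ the toric Bernstein polynomial is $\beta_{\mathbf{a}}(x)=\prod_{i=1}^{\ell} h_i(x)^{h_i(\mathbf{a})}$. Given control points $f\colon\mathcal{A}\to\mathbb{R}^d$ and weights $w=(w_{\mathbf{a}})\in\mathbb{R}^{\mathcal{A}}_{>}$ (all $w_{\mathbf{a}}>0$), the toric Bézier patch is $$F_w(x)=\frac{\sum_{\mathbf{a}\in\mathcal{A}} w_{\mathbf{a}} f(\mathbf{a})\beta_{\mathbf{a}}(x)}{\sum_{\mathbf{a}\in\mathcal{A}} w_{\mathbf{a}}\beta_{\mathbf{a}}(x)},\qquad x\in\Delta_{\mathcal{A}}.$$ An affinely independent triple $p_0,p_1,p_2\in\mathbb{R}^2$ has orientation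 given by the sign of $\det(p_1-p_0,\,p_2-p_0)$. An assignment $f\colon\mathcal{A}\to\mathbb{R}^2$ is weakly compatible if both of the following hold: <ol> <li>There exist affinely independent $\mathbf{a}_0,\mathbf{a}_1,\mathbf{a}_2\in\mathcal{A}$ such that $f(\mathbf{a}_0),f(\mathbf{a}_1),f(\mathbf{a}_2)$ are affinely independent.</li> <li>For any affinely independent $\mathbf{a}'_0,\mathbf{a}'_1,\mathbf{a}'_2\in\mathcal{A}$ with the same orientation as $\mathbf{a}_0,\mathbf{a}_1,\mathbf{a}_2$: if $f(\mathbf{a}'_0),f(\mathbf{a}'_1),f(\mathbf{a}'_2)$ are affinely independent, then they have the same orientation as $f(\mathbf{a}_0),f(\mathbf{a}_1),f(\mathbf{a}_2)$.</li> </ol> The assignment $f$ is compatible if it is weakly compatible and no two distinct vertices of $\Delta_{\mathcal{A}}$ have the same image under $f$. *)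

(* Defs.v *)
From HB Require Import structures.
From mathcomp Require Import all_boot all_order all_algebra.
Set Implicit Arguments. Unset Strict Implicit. Unset Printing Implicit Defensive.
Import Order.TTheory GRing.Theory Num.Theory.
Local Open Scope ring_scope.

Definition lattice := (int * int)%type.
(* An affine integer form h(x,y) = a x + b y + c, stored as ((a, b), c). *)
Definition affform := (int * int * int)%type.

Definition hZ (h : affform) (p : lattice) : int :=
  h.1.1 * p.1 + h.1.2 * p.2 + h.2.

Definition hR {R : pzRingType} (h : affform) (x : R * R) : R :=
  h.1.1%:~R * x.1 + h.1.2%:~R * x.2 + h.2%:~R.

Definition toR {R : pzRingType} (p : lattice) : R * R := (p.1%:~R, p.2%:~R).

Definition det3 {R : pzRingType} (p0 p1 p2 : R * R) : R :=
  (p1.1 - p0.1) * (p2.2 - p0.2) - (p1.2 - p0.2) * (p2.1 - p0.1).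

(* Delta_A is a polygon: A contains three affinely independent points. *)
Definition is_polygon (A : seq lattice) : Prop :=
  exists a0 a1 a2, [/\ a0 \in A, a1 \in A, a2 \in A & det3 a0 a1 a2 != 0].

(* h is an edge inequality of Delta_A: primitive normal, h >= 0 on A,
   and h vanishes at two distinct points of A (so {h = 0} cuts out an edge). *)
Definition is_edge_ineq (A : seq lattice) (h : affform) : Prop :=
  [/\ gcdz h.1.1 h.1.2 = 1,
      (forall p, p \in A -> 0 <= hZ h p) &
      exists p q, [/\ p \in A, q \in A, p != q, hZ h p = 0 & hZ h q = 0]].

Definition in_hull {R : realFieldType} (A : seq lattice) (x : R * R) : Prop :=
  exists lam : lattice -> R,
    [/\ (forall a, a \in A -> 0 <= lam a),
        \sum_(a <- A) lam a = 1,
        \sum_(a <- A) lam a * (toR a : R * R).1 = x.1 &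
        \sum_(a <- A) lam a * (toR a : R * R).2 = x.2].

Definition in_edge {R : realFieldType} (A : seq lattice) (h : affform) (x : R * R) : Prop :=
  in_hull A x /\ hR h x = 0.

(* Toric Bernstein polynomial beta_a(x) = prod_i h_i(x)^{h_i(a)}
   (h_i(a) >= 0 for a in A, so the exponent is the natural number |h_i(a)|). *)
Definition bernstein {R : pzRingType} (H : seq affform) (a : lattice) (x : R * R) : R :=
  \prod_(h <- H) hR h x ^+ `|hZ h a|%N.

Definition patch {R : realFieldType} (A : seq lattice) (H : seq affform)
  (f : lattice -> R * R) (w : lattice -> R) (x : R * R) : R * R :=
  let den := \sum_(a <- A) w a * bernstein H a x in
  ((\sum_(a <- A) w a * (f a).1 * bernstein H a x) / den,
   (\sum_(a <- A) w a * (f a).2 * bernstein H a x) / den).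

Definition weakly_compatible {R : realFieldType} (A : seq lattice)
  (f : lattice -> R * R) : Prop :=
  exists a0 a1 a2,
    [/\ [/\ a0 \in A, a1 \in A & a2 \in A],
        det3 a0 a1 a2 != 0,
        det3 (f a0) (f a1) (f a2) != 0 &
        forall b0 b1 b2, b0 \in A -> b1 \in A -> b2 \in A ->
          det3 b0 b1 b2 != 0 ->
          sgz (det3 b0 b1 b2) = sgz (det3 a0 a1 a2) ->
          det3 (f b0) (f b1) (f b2) != 0 ->
          sgz (det3 (f b0) (f b1) (f b2)) = sgz (det3 (f a0) (f a1) (f a2))].

Definition is_vertex {R : realFieldType} (A : seq lattice) (v : lattice) : Prop :=
  v \in A /\ exists c : R * R, forall p, p \in A -> p != v ->
    c.1 * (toR v : R * R).1 + c.2 * (toR v : R * R).2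
      < c.1 * (toR p : R * R).1 + c.2 * (toR p : R * R).2.

Definition compatible {R : realFieldType} (A : seq lattice) (f : lattice -> R * R) : Prop :=
  weakly_compatible A f /\
  (forall v1 v2, is_vertex (R := R) A v1 -> is_vertex (R := R) A v2 ->
     v1 != v2 -> f v1 != f v2).

(* Main.v *)
Require Import Defs.
From HB Require Import structures.
From mathcomp Require Import all_boot all_order all_algebra.
From mathcomp Require Import ring lra zify.
Import Order.TTheory GRing.Theory Num.Theory.
Set Implicit Arguments. Unset Strict Implicit. Unset Printing Implicit Defensive.
Local Open Scope ring_scope.



Definition dirf (h : affform) : affform := ((- h.1.2, h.1.1), 0).
Definition nrm (h : affform) : int := h.1.1 * h.1.1 + h.1.2 * h.1.2.
Definition lg (g h : affform) : int := g.1.1 * (- h.1.2) + g.1.2 * h.1.1.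

Lemma hR_toR (R : pzRingType) g p : hR g (toR p : R * R) = (hZ g p)%:~R.
Proof. rewrite /hR /hZ /toR /=. rewrite !rmorphD !rmorphM /=. by []. Qed.

Lemma KI (R : comPzRingType) (g h : affform) (p q : R * R) :
  hR h p = hR h q ->
  (nrm h)%:~R * (hR g q - hR g p) = (hR (dirf h) q - hR (dirf h) p) * (lg g h)%:~R.
Proof.
move=> E.
have E0 : hR h q - hR h p = 0 by rewrite E subrr.
apply/eqP; rewrite -subr_eq0; apply/eqP.
have -> : (nrm h)%:~R * (hR g q - hR g p) - (hR (dirf h) q - hR (dirf h) p) * (lg g h)%:~R
  = (hR h q - hR h p) * ((h.1.1)%:~R * (g.1.1)%:~R + (h.1.2)%:~R * (g.1.2)%:~R).
  rewrite /hR /nrm /lg /dirf /=. ring.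
by rewrite E0 mul0r.
Qed.

Lemma orient_id (a b : int) (u1 u2 v1 v2 : int) :
  a * u1 + b * u2 = 0 ->
  (a * a + b * b) * (u1 * v2 - u2 * v1) = - ((- b * u1 + a * u2) * (a * v1 + b * v2)).
Proof.
move=> E; apply/eqP; rewrite -subr_eq0; apply/eqP.
have -> : (a * a + b * b) * (u1 * v2 - u2 * v1) - - ((- b * u1 + a * u2) * (a * v1 + b * v2))
  = (a * u1 + b * u2) * (a * v2 - b * v1) by ring.
by rewrite E mul0r.
Qed.

Lemma det3_cyc (R : comPzRingType) (p q r : R * R) : det3 p q r = det3 q r p.
Proof. rewrite /det3; ring. Qed.
Lemma det3_swap (R : comPzRingType) (p q r : R * R) : det3 q p r = - det3 p q r.
Proof. rewrite /det3; ring. Qed.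
Lemma det3_four (R : comPzRingType) (P Q S B : R * R) :
  det3 P Q S = det3 P Q B - det3 P S B + det3 Q S B.
Proof. rewrite /det3; ring. Qed.

Lemma det3_collinear (R : numFieldType) (P Q X0 X1 X2 : R * R) :
  P != Q -> det3 P Q X0 = 0 -> det3 P Q X1 = 0 -> det3 P Q X2 = 0 ->
  det3 X0 X1 X2 = 0.
Proof.
move=> nPQ D0 D1 D2.
have E1 : (Q.1 - P.1) * det3 X0 X1 X2 =
  (X1.1 - X0.1) * (det3 P Q X2 - det3 P Q X0) - (X2.1 - X0.1) * (det3 P Q X1 - det3 P Q X0).
  rewrite /det3; ring.
have E2 : (Q.2 - P.2) * det3 X0 X1 X2 =
  (X1.2 - X0.2) * (det3 P Q X2 - det3 P Q X0) - (X2.2 - X0.2) * (det3 P Q X1 - det3 P Q X0).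
  rewrite /det3; ring.
rewrite D0 D1 D2 !subrr !mulr0 subrr in E1 E2.
have [e1|n1] := eqVneq (Q.1 - P.1) 0.
  have [e2|n2] := eqVneq (Q.2 - P.2) 0.
    case/negP: nPQ; case: P Q e1 e2 {E1 E2 D0 D1 D2} => [p1 p2] [q1 q2] /= e1 e2.
    move/eqP: e1; rewrite subr_eq0 => /eqP ->.
    by move/eqP: e2; rewrite subr_eq0 => /eqP ->.
  by move/eqP: E2; rewrite mulf_eq0 (negPf n2) => /eqP.
by move/eqP: E1; rewrite mulf_eq0 (negPf n1) => /eqP.
Qed.


Lemma split_pow (R : comPzRingType) (p q : R) (m k : nat) :
  p ^+ (k + m) * q ^+ m = (p ^+ m * q ^+ m) * p ^+ k.
Proof. rewrite exprD. set a := p ^+ k. set b := p ^+ m. set c := q ^+ m. ring. Qed.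
Lemma split_pow' (R : comPzRingType) (p q : R) (m k : nat) :
  p ^+ m * q ^+ (k + m) = (p ^+ m * q ^+ m) * q ^+ k.
Proof. rewrite exprD. set a := q ^+ k. set b := p ^+ m. set c := q ^+ m. ring. Qed.

Lemma factor_le (R : realDomainType) (p q : R) (m n : nat) :
  0 <= p -> 0 <= q -> 0 <= (n%:R - m%:R) * (q - p) ->
  p ^+ n * q ^+ m <= p ^+ m * q ^+ n.
Proof.
move=> p0 q0 H.
have [lemn|ltnm] := leqP m n.
  have [lepq|ltqp] := lerP p q.
    rewrite -(subnK lemn) split_pow split_pow'.
    apply: ler_wpM2l; first by rewrite mulr_ge0 // exprn_ge0.
    by apply: lerXn2r; rewrite ?nnegrE.
  have : (n%:R - m%:R) * (q - p) <= 0 :> R.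
    apply: mulr_ge0_le0; first by rewrite subr_ge0 ler_nat.
    by rewrite subr_le0 ltW.
  move=> H2.
  have E : (n%:R - m%:R) * (q - p) = 0 :> R by apply/eqP; rewrite eq_le H2 H.
  move/eqP: E; rewrite mulf_eq0 => /orP [|].
    by rewrite subr_eq0 eqr_nat => /eqP ->; rewrite mulrC.
  by rewrite subr_eq0 => /eqP E; move: ltqp; rewrite E ltxx.
have [leqp|ltpq] := lerP q p.
  rewrite -(subnK (ltnW ltnm)).
  rewrite [p ^+ n * _]mulrC [p ^+ (_ + n) * _]mulrC split_pow split_pow'.
  apply: ler_wpM2l; first by rewrite mulr_ge0 // exprn_ge0.
  by apply: lerXn2r; rewrite ?nnegrE.
have : (n%:R - m%:R) * (q - p) < 0 :> R.
  by rewrite pmulr_llt0 ?subr_gt0 // subr_lt0 ltr_nat.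
by rewrite ltNge H.
Qed.

Lemma factor_lt (R : realDomainType) (p q : R) (m n : nat) :
  0 <= p -> 0 <= q -> 0 < (n%:R - m%:R) * (q - p) -> 0 < p ^+ m * q ^+ n ->
  p ^+ n * q ^+ m < p ^+ m * q ^+ n.
Proof.
move=> p0 q0 H P.
have [lemn|ltnm] := leqP m n.
  have [lepq|ltqp] := lerP q p.
    have : (n%:R - m%:R) * (q - p) <= 0 :> R.
      by apply: mulr_ge0_le0; rewrite ?subr_ge0 ?ler_nat // subr_le0.
    by rewrite leNgt H.
  have ltmn : (m < n)%N.
    rewrite ltn_neqAle lemn andbT; apply/negP => /eqP E.
    by move: H; rewrite E subrr mul0r ltxx.
  rewrite -(subnK lemn) split_pow split_pow'.
  have qp : 0 < q by apply: le_lt_trans ltqp.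
  rewrite ltr_pM2l; last first.
    move: P; rewrite -(subnK lemn) split_pow'.
    by rewrite pmulr_lgt0 ?exprn_gt0.
  by rewrite ltrXn2r // subn_eq0 -ltnNge.
have [lepq|ltpq] := lerP p q.
  have : (n%:R - m%:R) * (q - p) <= 0 :> R.
    by rewrite mulrC; apply: mulr_ge0_le0; rewrite ?subr_ge0 // subr_le0 ler_nat ltnW.
  by rewrite leNgt H.
have pp : 0 < p by apply: le_lt_trans ltpq.
rewrite -(subnK (ltnW ltnm)).
rewrite [p ^+ n * _]mulrC [p ^+ (_ + n) * _]mulrC split_pow split_pow'.
rewrite ltr_pM2l; last first.
  move: P; rewrite -(subnK (ltnW ltnm)) split_pow.
  by rewrite pmulr_lgt0 ?exprn_gt0 // mulrC.
by rewrite ltrXn2r // subn_eq0 -ltnNge.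
Qed.



Lemma exists_min (R : realDomainType) (T : eqType) (s : seq T) (F : T -> R) (x : T) :
  x \in s -> exists2 y, y \in s & forall z, z \in s -> F y <= F z.
Proof.
elim: s x => [//|a s IH] x; rewrite inE => /orP [_|xs].
  case: s IH => [|b s] IH.
    by exists a; rewrite ?mem_head // => z; rewrite inE => /eqP ->.
  have [y ys Hy] := IH b (mem_head _ _).
  have [le|lt] := lerP (F a) (F y).
    exists a; first exact: mem_head.
    move=> z; rewrite inE => /orP [/eqP ->//|zs]; exact: le_trans le (Hy _ zs).
  exists y; first by rewrite inE ys orbT.
  move=> z; rewrite inE => /orP [/eqP ->|zs]; [exact: ltW | exact: Hy].
have [y ys Hy] := IH x xs.
have [le|lt] := lerP (F a) (F y).
  exists a; first exact: mem_head.
  move=> z; rewrite inE => /orP [/eqP ->//|zs]; exact: le_trans le (Hy _ zs).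
exists y; first by rewrite inE ys orbT.
move=> z; rewrite inE => /orP [/eqP ->|zs]; [exact: ltW | exact: Hy].
Qed.

Definition shf (g : affform) (c : int) : affform := (g.1, g.2 + c).
Lemma hZ_shf g c p : hZ (shf g c) p = hZ g p + c.
Proof. rewrite /hZ /shf /=; ring. Qed.
Lemma hR_shf (R : pzRingType) g c (x : R * R) : hR (shf g c) x = hR g x + c%:~R.
Proof. rewrite /hR /shf /= rmorphD /=. by rewrite addrA. Qed.

Lemma hull_aff (R : realFieldType) (A : seq lattice) (x : R * R) :
  in_hull A x -> exists lam : lattice -> R, (forall a, a \in A -> 0 <= lam a) /\
    forall g, hR g x = \sum_(a <- A) lam a * (hZ g a)%:~R.
Proof.
case=> lam [l0 ls l1 l2]; exists lam; split => // g.
rewrite /hR -l1 -l2 -[g.2%:~R]mulr1 -ls !mulr_sumr -!big_split /=.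
apply: eq_bigr => a _; rewrite /hZ /toR /=; ring.
Qed.

Lemma edge_nonneg (R : realFieldType) (A : seq lattice) (h g : affform) (x : R * R) :
  (forall p, p \in A -> 0 <= hZ h p) -> in_edge A h x ->
  (forall a, a \in A -> hZ h a = 0 -> 0 <= hZ g a) -> 0 <= hR g x.
Proof.
move=> hA [hx hx0] Hg.
have [lam [l0 Hl]] := hull_aff hx.
have Z : forall a, a \in A -> lam a * (hZ h a)%:~R = 0.
  have := Hl h; rewrite hx0 => /esym/eqP.
  rewrite big_seq psumr_eq0; last by move=> a aA; rewrite mulr_ge0 ?l0 ?ler0z ?hA.
  by move=> /allP Hall a aA; have := Hall a aA; rewrite aA /= => /eqP.
rewrite Hl big_seq sumr_ge0 // => a aA.
have [e|ne] := eqVneq (hZ h a) 0.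
  by rewrite mulr_ge0 ?l0 ?ler0z ?Hg.
have := Z a aA; move/eqP; rewrite mulf_eq0 intr_eq0 (negPf ne) orbF => /eqP ->.
by rewrite mul0r.
Qed.

Lemma hull_nonneg (R : realFieldType) (A : seq lattice) (g : affform) (x : R * R) :
  in_hull A x -> (forall a, a \in A -> 0 <= hZ g a) -> 0 <= hR g x.
Proof.
move=> hx Hg; have [lam [l0 Hl]] := hull_aff hx.
by rewrite Hl big_seq sumr_ge0 // => a aA; rewrite mulr_ge0 ?l0 ?ler0z ?Hg.
Qed.

Lemma KIZ (g h : affform) (p q : lattice) :
  hZ h p = hZ h q ->
  nrm h * (hZ g q - hZ g p) = (hZ (dirf h) q - hZ (dirf h) p) * lg g h.
Proof.
move=> E.
have E0 : hZ h q - hZ h p = 0 by rewrite E subrr.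
apply/eqP; rewrite -subr_eq0; apply/eqP.
have -> : nrm h * (hZ g q - hZ g p) - (hZ (dirf h) q - hZ (dirf h) p) * lg g h
  = (hZ h q - hZ h p) * ((h.1.1) * (g.1.1) + (h.1.2) * (g.1.2)).
  rewrite /hZ /nrm /lg /dirf /=. ring.
by rewrite E0 mul0r.
Qed.

Lemma nrm_gt0 (h : affform) : gcdz h.1.1 h.1.2 = 1 -> 0 < nrm h.
Proof.
move=> G; rewrite /nrm.
have [e1|n1] := eqVneq h.1.1 0.
  have [e2|n2] := eqVneq h.1.2 0.
    by move: G; rewrite e1 e2 /gcdz /=.
  have : 0 < h.1.2 * h.1.2 by rewrite -expr2 exprn_even_gt0. rewrite e1. lia.
have : 0 < h.1.1 * h.1.1 by rewrite -expr2 exprn_even_gt0. have : 0 <= h.1.2 * h.1.2 by rewrite -expr2 sqr_ge0. lia.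
Qed.

Lemma line_uniqZ (h : affform) (p q : lattice) :
  0 < nrm h -> hZ h p = hZ h q -> hZ (dirf h) p = hZ (dirf h) q -> p = q.
Proof.
move=> N E T.
have K1 := KIZ ((1, 0), 0) E; have K2 := KIZ ((0, 1), 0) E.
rewrite T subrr mul0r in K1; rewrite T subrr mul0r in K2.
move/eqP: K1; rewrite mulf_eq0 (gt_eqF N) /= subr_eq0 /hZ /= => /eqP.
move/eqP: K2; rewrite mulf_eq0 (gt_eqF N) /= subr_eq0 /hZ /=.
case: p q {E T} => [p1 p2] [q1 q2] /= /eqP E2 E1.
have -> : q1 = p1 by move: E1; rewrite !mul1r !mul0r !addr0 ?add0r.
have -> : q2 = p2 by move: E2; rewrite !mul1r !mul0r !addr0 ?add0r.
by [].
Qed.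

Lemma line_uniqR (R : realFieldType) (h : affform) (p q : R * R) :
  0 < nrm h -> hR h p = hR h q -> hR (dirf h) p = hR (dirf h) q -> p = q.
Proof.
move=> N E T.
have K1 := KI ((1, 0), 0) E; have K2 := KI ((0, 1), 0) E.
rewrite T subrr mul0r in K1; rewrite T subrr mul0r in K2.
have N' : (nrm h)%:~R != 0 :> R by rewrite intr_eq0 gt_eqF.
move/eqP: K1; rewrite mulf_eq0 (negPf N') /= subr_eq0 /hR /= => /eqP.
move/eqP: K2; rewrite mulf_eq0 (negPf N') /= subr_eq0 /hR /=.
case: p q {E T} => [p1 p2] [q1 q2] /= /eqP E2 E1.
have -> : q1 = p1 by move: E1; rewrite !mul1r !mul0r !addr0 ?add0r.
have -> : q2 = p2 by move: E2; rewrite !mul1r !mul0r !addr0 ?add0r.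
by [].
Qed.



Lemma normalize (g' : affform) (v : lattice) :
  (g'.1.1 != 0) || (g'.1.2 != 0) -> hZ g' v = 0 ->
  exists g : affform, gcdz g.1.1 g.1.2 = 1 /\
    exists2 k : int, 0 < k & forall p, hZ g' p = k * hZ g p.
Proof.
move=> nz gv.
set k : int := gcdz g'.1.1 g'.1.2.
have k0 : k != 0 by rewrite /k gcdz_eq0 negb_and.
have kpos : 0 < k by rewrite lt_def k0 /k.
have [a Ea] := dvdzP (dvdz_gcdl g'.1.1 g'.1.2).
have [b Eb] := dvdzP (dvdz_gcdr g'.1.1 g'.1.2).
exists ((a, b), - (a * v.1 + b * v.2)); split.
  rewrite /=.
  have G := mulz_gcdl a b k.
  rewrite -Ea -Eb -/k in G.
  have Ek : `|k|%N = k :> int by rewrite gez0_abs // ltW.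
  rewrite Ek in G.
  apply/eqP; rewrite -(inj_eq (mulIf k0)) mul1r; apply/eqP; exact: G.
exists k => // p.
have C : g'.2 = - (g'.1.1 * v.1 + g'.1.2 * v.2).
  by move: gv; rewrite /hZ => /eqP; rewrite addrC addr_eq0 => /eqP ->.
move: (Ea) (Eb); rewrite -/k; clearbody k => Ea1 Eb1; rewrite /hZ C Ea1 Eb1 /=; ring.
Qed.

Definition dirs (s : int) (h : affform) : affform := ((s * - h.1.2, s * h.1.1), 0).
Lemma hZ_dirs s h p : hZ (dirs s h) p = s * hZ (dirf h) p.
Proof. rewrite /hZ /dirs /dirf /=; ring. Qed.
Lemma hR_dirs (R : comPzRingType) s h (x : R * R) : hR (dirs s h) x = s%:~R * hR (dirf h) x.
Proof. rewrite /hR /dirs /dirf /=; ring. Qed.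

Lemma adjacent_edge (A : seq lattice) (H : seq affform) (h : affform) (v : lattice) (s : int) :
  (forall g, g \in H <-> is_edge_ineq A g) -> is_edge_ineq A h ->
  (s = 1 \/ s = -1) ->
  v \in A -> hZ h v = 0 ->
  (forall a, a \in A -> hZ h a = 0 -> s * hZ (dirf h) v <= s * hZ (dirf h) a) ->
  (exists2 b, b \in A & hZ h b != 0) ->
  exists2 g, g \in H & hZ g v = 0 /\
    forall a, a \in A -> hZ h a = 0 -> a != v -> 0 < hZ g a.
Proof.
move=> HH [hg hA _] s1 vA hv vmin [b0 b0A b0n].
have N := nrm_gt0 hg.
set O := [seq a <- A | hZ h a != 0].
have b0O : b0 \in O by rewrite mem_filter b0n b0A.
pose t (p : lattice) : int := s * hZ (dirf h) p - s * hZ (dirf h) v.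
have [b bO bmin] := exists_min (fun p => (t p)%:~R / (hZ h p)%:~R : rat) b0O.
move: bO; rewrite mem_filter => /andP [bn bA].
have hbpos : 0 < hZ h b by rewrite lt_def bn hA.
pose g' : affform := ((s * - h.1.2 * hZ h b - t b * h.1.1,
                       s * h.1.1 * hZ h b - t b * h.1.2),
                      - s * hZ (dirf h) v * hZ h b - t b * h.2).
have g'E : forall p, hZ g' p = t p * hZ h b - t b * hZ h p.
  by move=> p; rewrite /g' /t /dirf /hZ /=; ring.
have g'v : hZ g' v = 0 by rewrite g'E hv /t subrr !mul0r mulr0 subrr.
have ss : s * s = 1 by case: s1 => ->.
have lg' : g'.1.1 * (- h.1.2) + g'.1.2 * h.1.1 = s * nrm h * hZ h b.
  by rewrite /g' /nrm /=; ring.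
have nz : (g'.1.1 != 0) || (g'.1.2 != 0).
  rewrite -negb_and; apply/negP => /andP [/eqP e1 /eqP e2].
  move: lg'; rewrite e1 e2 !mul0r addr0 => /esym/eqP.
  rewrite !mulf_eq0 (gt_eqF N) (negPf bn) !orbF => /eqP s0.
  by case: s1; rewrite s0.
have [g [gg [k kpos gk]]] := normalize nz g'v.
have g'nn : forall p, p \in A -> 0 <= hZ g' p.
  move=> p pA; rewrite g'E.
  have [hp0|hpn] := eqVneq (hZ h p) 0.
    rewrite hp0 mulr0 subr0 mulr_ge0 // ?hA // /t subr_ge0; exact: vmin.
  have hppos : 0 < hZ h p by rewrite lt_def hpn hA.
  have := bmin p; rewrite mem_filter hpn pA => /(_ isT).
  rewrite ler_pdivrMr ?ltr0z // mulrAC ler_pdivlMr ?ltr0z //.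
  by rewrite -!intrM ler_int subr_ge0 mulrC.
have gnn : forall p, p \in A -> 0 <= hZ g p.
  by move=> p pA; have := g'nn p pA; rewrite gk pmulr_rge0.
exists g.
  apply/HH; split => //.
  exists v, b; split => //.
  - by apply/negP => /eqP vb; move: bn; rewrite -vb hv eqxx.
  - by apply/eqP; rewrite -(inj_eq (mulfI (negbT (gt_eqF kpos)))) -gk mulr0 g'v.
  - by apply/eqP; rewrite -(inj_eq (mulfI (negbT (gt_eqF kpos)))) -gk mulr0 g'E subrr.
split.
  by apply/eqP; rewrite -(inj_eq (mulfI (negbT (gt_eqF kpos)))) -gk mulr0 g'v.
move=> a aA ha nav.
have : 0 < hZ g' a.
  rewrite g'E ha mulr0 subr0 pmulr_lgt0 // /t subr_gt0 lt_def vmin // andbT.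
  apply/negP => /eqP E.
  have E' : hZ (dirf h) a = hZ (dirf h) v.
    by move: E => /(congr1 (fun z => s * z)); rewrite !mulrA ss !mul1r.
  by move/negP: nav; apply; apply/eqP; apply: line_uniqZ N _ E'; rewrite ha hv.
by rewrite gk pmulr_rgt0.
Qed.



Lemma bern_nn (R : realFieldType) (H : seq affform) a (x : R * R) :
  (forall g, g \in H -> 0 <= hR g x) -> 0 <= bernstein H a x.
Proof.
move=> Hg; rewrite /bernstein big_seq prodr_ge0 // => g gH.
by rewrite exprn_ge0 ?Hg.
Qed.

Lemma bern_pos (R : realFieldType) (H : seq affform) a (x : R * R) :
  (forall g, g \in H -> 0 < hR g x \/ hZ g a = 0) -> 0 < bernstein H a x.
Proof.
move=> Hg; rewrite /bernstein big_seq prodr_gt0 // => g gH.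
case: (Hg g gH) => [p|z]; first by rewrite exprn_gt0.
by rewrite z /= expr0.
Qed.

Lemma bern_zero (R : realFieldType) (H : seq affform) a (x : R * R) g :
  g \in H -> hR g x = 0 -> hZ g a != 0 -> bernstein H a x = 0.
Proof.
move=> gH gx ga; apply/eqP; rewrite /bernstein prodf_seq_eq0.
apply/hasP; exists g => //=.
by rewrite gx expr0n /= absz_eq0 (negPf ga).
Qed.

Lemma bern_self (R : realFieldType) (H : seq affform) a :
  (forall g, g \in H -> 0 <= hZ g a) -> 0 < bernstein H a (toR a : R * R).
Proof.
move=> Hg; apply: bern_pos => g gH; rewrite hR_toR.
have := Hg g gH; rewrite le_eqVlt => /orP [/eqP <-|p]; [by right | by left; rewrite ltr0z].
Qed.

Lemma sum_det (R : comPzRingType) (A : seq lattice) (c : lattice -> R)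
  (f : lattice -> R * R) (Z W : R * R) :
  \sum_(a <- A) c a * det3 (f a) Z W =
  (\sum_(a <- A) c a * (f a).1) * (Z.2 - W.2) - (\sum_(a <- A) c a * (f a).2) * (Z.1 - W.1)
  + (\sum_(a <- A) c a) * (Z.1 * W.2 - Z.2 * W.1).
Proof.
elim: A => [|a A IH]; first by rewrite !big_nil; ring.
by rewrite !big_cons IH /det3; ring.
Qed.

Definition cw (R : realFieldType) (H : seq affform) (w : lattice -> R) (x : R * R) a :=
  w a * bernstein H a x.

Lemma patch_eq (R : realFieldType) (A : seq lattice) H f w (x : R * R) :
  patch A H f w x =
  ((\sum_(a <- A) cw H w x a * (f a).1) / \sum_(a <- A) cw H w x a,
   (\sum_(a <- A) cw H w x a * (f a).2) / \sum_(a <- A) cw H w x a).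
Proof.
rewrite /patch /cw; congr (_ / _, _ / _); apply: eq_bigr => a _; ring.
Qed.

Lemma patch_sum (R : realFieldType) (A : seq lattice) H f w (x P : R * R) :
  0 < \sum_(a <- A) cw H w x a -> patch A H f w x = P ->
  (\sum_(a <- A) cw H w x a * (f a).1 = (\sum_(a <- A) cw H w x a) * P.1) /\
  (\sum_(a <- A) cw H w x a * (f a).2 = (\sum_(a <- A) cw H w x a) * P.2).
Proof.
move=> N; rewrite patch_eq => <- /=.
by split; rewrite mulrC divfK // gt_eqF.
Qed.

Lemma sum_det_patch (R : realFieldType) (A : seq lattice) H f w (x P Z W : R * R) :
  0 < \sum_(a <- A) cw H w x a -> patch A H f w x = P ->
  \sum_(a <- A) cw H w x a * det3 (f a) Z W = (\sum_(a <- A) cw H w x a) * det3 P Z W.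
Proof.
move=> N E; have [E1 E2] := patch_sum N E.
by rewrite sum_det E1 E2 /det3; ring.
Qed.

Lemma patch_vertex (R : realFieldType) (A : seq lattice) H f w (x : R * R) v :
  uniq A -> v \in A -> 0 < w v -> 0 < bernstein H v x ->
  (forall a, a \in A -> a != v -> bernstein H a x = 0) ->
  patch A H f w x = f v.
Proof.
move=> uA vA wv bv Z.
have S : forall F : lattice -> R, \sum_(a <- A) cw H w x a * F a = cw H w x v * F v.
  move=> F; rewrite (bigD1_seq v) //= big_seq_cond big1 ?addr0 // => a /andP [aA nav].
  by rewrite /cw Z // mulr0 mul0r.
have S0 : \sum_(a <- A) cw H w x a = cw H w x v.
  by have := S (fun _ => 1); rewrite mulr1 => <-; apply: eq_bigr => a _; rewrite mulr1.
have cv : cw H w x v != 0 by rewrite /cw mulf_neq0 // gt_eqF.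
rewrite patch_eq S S S0 !(mulrC (cw H w x v)) !mulfK //.
by case: (f v).
Qed.

Lemma sum0_nn (R : realFieldType) (T : eqType) (s : seq T) (F : T -> R) :
  (forall a, a \in s -> 0 <= F a) -> \sum_(a <- s) F a = 0 -> forall a, a \in s -> F a = 0.
Proof.
move=> P E; move/eqP: E; rewrite big_seq psumr_eq0 //.
by move=> /allP Hall a aA; have := Hall a aA; rewrite aA /= => /eqP.
Qed.



Lemma orient_det (h : affform) (a a' b : lattice) :
  hZ h a = 0 -> hZ h a' = 0 ->
  nrm h * det3 a a' b = - ((hZ (dirf h) a' - hZ (dirf h) a) * hZ h b).
Proof.
move=> ha ha'.
have E0 : hZ h a' - hZ h a = 0 by rewrite ha ha' subrr.
have Hb : hZ h b = hZ h b - hZ h a by rewrite ha subr0.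
rewrite Hb.
have := @orient_id (h.1.1) (h.1.2) (a'.1 - a.1) (a'.2 - a.2) (b.1 - a.1) (b.2 - a.2).
have -> : h.1.1 * (a'.1 - a.1) + h.1.2 * (a'.2 - a.2) = hZ h a' - hZ h a.
  by rewrite /hZ; ring.
rewrite E0 => /(_ erefl) E.
transitivity ((h.1.1 * h.1.1 + h.1.2 * h.1.2) *
  ((a'.1 - a.1) * (b.2 - a.2) - (a'.2 - a.2) * (b.1 - a.1))).
  rewrite /nrm /det3; ring.
rewrite E /hZ /dirf /=; ring.
Qed.

Lemma sgz_mul_ge0 (R : realDomainType) (K : R) : 0 <= (sgz K)%:~R * K.
Proof. by case: sgzP => //= H; lra. Qed.

Lemma sum_pos (R : realFieldType) (T : eqType) (s : seq T) (F : T -> R) a0 :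
  uniq s -> (forall a, a \in s -> 0 <= F a) -> a0 \in s -> 0 < F a0 -> 0 < \sum_(a <- s) F a.
Proof.
move=> us P a0s Fa; rewrite (bigD1_seq a0) //=.
apply: ltr_wpDr => //; rewrite big_seq_cond sumr_ge0 // => a /andP [aS _]; exact: P aS.
Qed.

Lemma zero_terms (R : realFieldType) (T : eqType) (s : seq T) (c G : T -> R) (sg : R) :
  sg != 0 -> (forall a, a \in s -> 0 <= sg * (c a * G a)) ->
  \sum_(a <- s) c a * G a = 0 -> forall a, a \in s -> c a != 0 -> G a = 0.
Proof.
move=> s0 P E a aS ca.
have E' : \sum_(a <- s) sg * (c a * G a) = 0 by rewrite -mulr_sumr E mulr0.
have := sum0_nn P E' aS; move/eqP; rewrite !mulf_eq0 (negPf s0) (negPf ca) /=.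
by move/eqP.
Qed.

Lemma vertex_of (R : realFieldType) (A : seq lattice) (h g : affform) (v : lattice) :
  v \in A -> hZ h v = 0 -> hZ g v = 0 ->
  (forall p, p \in A -> 0 <= hZ h p) -> (forall p, p \in A -> 0 <= hZ g p) ->
  (forall p, p \in A -> hZ h p = 0 -> hZ g p = 0 -> p = v) ->
  is_vertex (R := R) A v.
Proof.
move=> vA hv gv hA gA U; split => //.
exists (((h.1.1 + g.1.1)%:~R, (h.1.2 + g.1.2)%:~R)) => p pA npv /=.
have key : 0 < hZ h p + hZ g p.
  have h0 := hA p pA; have g0 := gA p pA.
  rewrite lt_def paddr_eq0 // addr_ge0 // andbT.
  apply/negP => /andP [/eqP e1 /eqP e2].
  by move/eqP: npv; apply; apply: U.
have : (hZ h v + hZ g v)%:~R < (hZ h p + hZ g p)%:~R :> R.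
  by rewrite hv gv addr0 ltr0z.
rewrite /hZ /toR /= !rmorphD !rmorphM /=.
lra.
Qed.



Lemma fsign (R : realFieldType) (h g : affform) (a a' : lattice) (z1 z2 : R * R) :
  hZ h a = hZ h a' -> hR h z1 = hR h z2 ->
  ((nrm h)%:~R * (nrm h)%:~R) * (((hZ g a')%:~R - (hZ g a)%:~R) * (hR g z2 - hR g z1)) =
  ((hZ (dirf h) a' - hZ (dirf h) a)%:~R * (hR (dirf h) z2 - hR (dirf h) z1)) *
  ((lg g h)%:~R * (lg g h)%:~R) :> R.
Proof.
move=> Ea Ez.
have K1 := KIZ g Ea.
have K2 := KI g Ez.
have K1' : (nrm h)%:~R * ((hZ g a')%:~R - (hZ g a)%:~R) =
           (hZ (dirf h) a' - hZ (dirf h) a)%:~R * (lg g h)%:~R :> R.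
  by rewrite -rmorphB -!rmorphM /= K1.
transitivity (((nrm h)%:~R * ((hZ g a')%:~R - (hZ g a)%:~R)) *
              ((nrm h)%:~R * (hR g z2 - hR g z1)) :> R); first ring.
rewrite K1' K2; ring.
Qed.

Lemma absz_cast (R : numDomainType) (x : int) : 0 <= x -> (`|x|%N)%:R = x%:~R :> R.
Proof. by move=> x0; rewrite natr_absz ger0_norm. Qed.

Lemma bern_cmp (R : realFieldType) (H : seq affform) (h : affform) (a a' : lattice) (z1 z2 : R * R) :
  0 < nrm h -> hZ h a = 0 -> hZ h a' = 0 -> hR h z1 = 0 -> hR h z2 = 0 ->
  (forall g, g \in H -> 0 <= hZ g a /\ 0 <= hZ g a') ->
  (forall g, g \in H -> 0 <= hR g z1 /\ 0 <= hR g z2) ->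
  hZ (dirf h) a <= hZ (dirf h) a' -> hR (dirf h) z1 <= hR (dirf h) z2 ->
  bernstein H a' z1 * bernstein H a z2 <= bernstein H a z1 * bernstein H a' z2.
Proof.
move=> N ha ha' hz1 hz2 Ga Gz ta tz.
rewrite /bernstein -!big_split /= big_seq [X in _ <= X]big_seq.
apply: ler_prod => g gH.
have [ga ga'] := Ga g gH; have [gz1 gz2] := Gz g gH.
rewrite mulr_ge0 ?exprn_ge0 //=.
apply: factor_le => //.
rewrite !absz_cast //.
have F := fsign g (etrans ha (esym ha')) (etrans hz1 (esym hz2)).
have Np : 0 < (nrm h)%:~R * (nrm h)%:~R :> R by rewrite mulr_gt0 ?ltr0z.
rewrite -(pmulr_rge0 _ Np) F; apply: mulr_ge0; last by rewrite -expr2 sqr_ge0.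
by rewrite mulr_ge0 // ?ler0z subr_ge0.
Qed.

Lemma bern_cmp_lt (R : realFieldType) (H : seq affform) (h g0 : affform) (a a' : lattice) (z1 z2 : R * R) :
  uniq H -> g0 \in H -> lg g0 h != 0 -> 0 < hR g0 z1 -> 0 < hR g0 z2 ->
  0 < nrm h -> hZ h a = 0 -> hZ h a' = 0 -> hR h z1 = 0 -> hR h z2 = 0 ->
  (forall g, g \in H -> 0 <= hZ g a /\ 0 <= hZ g a') ->
  (forall g, g \in H -> 0 <= hR g z1 /\ 0 <= hR g z2) ->
  hZ (dirf h) a < hZ (dirf h) a' -> hR (dirf h) z1 < hR (dirf h) z2 ->
  0 < bernstein H a z1 -> 0 < bernstein H a' z2 ->
  bernstein H a' z1 * bernstein H a z2 < bernstein H a z1 * bernstein H a' z2.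
Proof.
move=> uH g0H lg0 g0z1 g0z2 N ha ha' hz1 hz2 Ga Gz ta tz b1 b2.
have Pos : 0 < bernstein H a z1 * bernstein H a' z2 by rewrite mulr_gt0.
move: Pos; rewrite /bernstein -!big_split /=.
rewrite (bigD1_seq g0) //= => Pos.
rewrite (bigD1_seq g0) //=.
set X0 := hR g0 z1 ^+ `|hZ g0 a| * hR g0 z2 ^+ `|hZ g0 a'| in Pos |- *.
set RX := \prod_(i <- H | i != g0) (hR i z1 ^+ `|hZ i a| * hR i z2 ^+ `|hZ i a'|) in Pos |- *.
set Y0 := hR g0 z1 ^+ `|hZ g0 a'| * hR g0 z2 ^+ `|hZ g0 a|.
set RY := \prod_(i <- H | i != g0) (hR i z1 ^+ `|hZ i a'| * hR i z2 ^+ `|hZ i a|).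
have [ga ga'] := Ga g0 g0H.
have RYX : 0 <= RY <= RX.
  rewrite /RY /RX big_seq_cond [X in _ <= _ <= X]big_seq_cond.
  rewrite prodr_ge0 /=; last first.
    move=> g /andP [gH _]; have [gz1 gz2] := Gz g gH.
    by rewrite mulr_ge0 ?exprn_ge0.
  apply: ler_prod => g /andP [gH _].
  have [ga1 ga1'] := Ga g gH; have [gz1 gz2] := Gz g gH.
  rewrite mulr_ge0 ?exprn_ge0 //=.
  apply: factor_le => //.
  rewrite !absz_cast //.
  have F := fsign g (etrans ha (esym ha')) (etrans hz1 (esym hz2)).
  have Np : 0 < (nrm h)%:~R * (nrm h)%:~R :> R by rewrite mulr_gt0 ?ltr0z.
  rewrite -(pmulr_rge0 _ Np) F; apply: mulr_ge0; last by rewrite -expr2 sqr_ge0.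
  by rewrite mulr_ge0 // ?ler0z subr_ge0 ltW.
have X0pos : 0 < X0 by rewrite mulr_gt0 ?exprn_gt0.
have Y0X0 : 0 <= Y0 < X0.
  rewrite mulr_ge0 ?exprn_ge0 ?ltW //=.
  apply: factor_lt; rewrite ?ltW //.
  rewrite !absz_cast //.
  have F := fsign g0 (etrans ha (esym ha')) (etrans hz1 (esym hz2)).
  have Np : 0 < (nrm h)%:~R * (nrm h)%:~R :> R by rewrite mulr_gt0 ?ltr0z.
  rewrite -(pmulr_rgt0 _ Np) F; apply: mulr_gt0; last by rewrite -expr2 exprn_even_gt0 //= intr_eq0.
  by rewrite mulr_gt0 // ?ltr0z subr_gt0.
have RXpos : 0 < RX.
  case/andP: RYX => RY0 RYRX.
  have RX0 : 0 <= RX := le_trans RY0 RYRX.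
  rewrite lt_def RX0 andbT; apply/negP => /eqP E.
  by move: Pos; rewrite E mulr0 ltxx.
case/andP: RYX => RY0 RYRX; case/andP: Y0X0 => Y00 Y0X0.
apply: (le_lt_trans (ler_wpM2l Y00 RYRX)).
by rewrite ltr_pM2r.
Qed.



Lemma det3_pp (R : comPzRingType) (p q : R * R) : det3 p p q = 0.
Proof. rewrite /det3; ring. Qed.
Lemma det3_pqp (R : comPzRingType) (p q : R * R) : det3 p q p = 0.
Proof. rewrite /det3; ring. Qed.
Lemma det3_pqq (R : comPzRingType) (p q : R * R) : det3 p q q = 0.
Proof. rewrite /det3; ring. Qed.

Theorem corollary2 (R : rcfType) (A : seq lattice) (H : seq affform)
  (f : lattice -> R * R) :
  uniq A -> is_polygon A ->
  uniq H -> (forall h, h \in H <-> is_edge_ineq A h) ->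
  compatible A f ->
  forall w : lattice -> R, (forall a, a \in A -> 0 < w a) ->
  forall h, h \in H ->
  forall x y : R * R, in_edge A h x -> in_edge A h y ->
    patch A H f w x = patch A H f w y -> x = y.
Proof.
move=> uA poly uH HH [wc vc] w wpos h hH.
have hE := (HH h).1 hH.
have [hg hA [p [q [pA qA npq hp hq]]]] := hE.
have N := nrm_gt0 hg.
have NR : 0 < (nrm h)%:~R :> R by rewrite ltr0z.
have HA : forall g, g \in H -> forall a, a \in A -> 0 <= hZ g a.
  by move=> g gH; have [_ gA _] := (HH g).1 gH.
pose tau := hZ (dirf h).
pose tauR (z : R * R) := hR (dirf h) z.
pose Ed := [seq a <- A | hZ h a == 0].
have pEd : p \in Ed by rewrite mem_filter hp eqxx pA.
have [v0 v0E v0min] := exists_min (fun a => tau a) pEd.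
have [v1 v1E v1max] := exists_min (fun a => - tau a) pEd.
move: v0E v1E; rewrite !mem_filter => /andP [/eqP hv0 v0A] /andP [/eqP hv1 v1A].
have v0m : forall a, a \in A -> hZ h a = 0 -> tau v0 <= tau a.
  by move=> a aA ha; apply: v0min; rewrite mem_filter ha eqxx aA.
have v1m : forall a, a \in A -> hZ h a = 0 -> tau a <= tau v1.
  by move=> a aA ha; rewrite -lerN2; apply: v1max; rewrite mem_filter ha eqxx aA.
have [b0 b0A b0n] : exists2 b, b \in A & hZ h b != 0.
  have [/hasP [b bA bn]|nh] := boolP (has (fun b => hZ h b != 0) A); first by exists b.
  exfalso; case: poly => a0 [a1 [a2 [a0A a1A a2A D]]].
  have Z : forall a, a \in A -> hZ h a = 0.
    by move=> a aA; apply/eqP; apply/negPn/negP => an; case/negP: nh; apply/hasP; exists a.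
  have := orient_det a2 (Z a0 a0A) (Z a1 a1A).
  rewrite (Z a2 a2A) mulr0 oppr0 => /eqP; rewrite mulf_eq0 (gt_eqF N) /=.
  by rewrite (negPf D).
have v0m' : forall a, a \in A -> hZ h a = 0 -> 1 * hZ (dirf h) v0 <= 1 * hZ (dirf h) a.
  by move=> a aA ha; rewrite !mul1r; exact: v0m a aA ha.
have v1m' : forall a, a \in A -> hZ h a = 0 -> -1 * hZ (dirf h) v1 <= -1 * hZ (dirf h) a.
  by move=> a aA ha; rewrite !mulN1r lerN2; exact: v1m a aA ha.
have exb : exists2 b, b \in A & hZ h b != 0 by exists b0.
have [g0 g0H [g0v0 g0pos]] := adjacent_edge HH hE (or_introl erefl) v0A hv0 v0m' exb.
have [g1 g1H [g1v1 g1pos]] := adjacent_edge HH hE (or_intror erefl) v1A hv1 v1m' exb.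
have tauE : forall a, a \in A -> hZ h a = 0 -> tau a = tau v0 -> a = v0.
  by move=> a aA ha ta; apply: line_uniqZ N _ ta; rewrite ha hv0.
have nv01 : v0 != v1.
  apply/eqP => e.
  have tp : tau p = tau v0 by apply/eqP; rewrite eq_le v0m // andbT e v1m.
  have tq : tau q = tau v0 by apply/eqP; rewrite eq_le v0m // andbT e v1m.
  by move/eqP: npq; apply; rewrite (tauE p) // (tauE q).
have V0 : is_vertex (R := R) A v0.
  apply: vertex_of v0A hv0 g0v0 hA (HA g0 g0H) _ => a aA ha ga.
  apply/eqP; apply/negPn/negP => na; have := g0pos a aA ha na; by rewrite ga ltxx.
have V1 : is_vertex (R := R) A v1.
  apply: vertex_of v1A hv1 g1v1 hA (HA g1 g1H) _ => a aA ha ga.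
  apply/eqP; apply/negPn/negP => na; have := g1pos a aA ha na; by rewrite ga ltxx.
have fne : f v0 != f v1 := vc v0 v1 V0 V1 nv01.

case: wc => a0 [a1 [a2 [[a0A a1A a2A] D0 FD0 WC]]].
pose rho := sgz (det3 a0 a1 a2).
pose phi := sgz (det3 (f a0) (f a1) (f a2)).
pose sg : R := (- (rho * phi))%:~R.
have rhoE : rho = -1 \/ rho = 1.
  rewrite /rho; case: sgzP D0 => //; by [right | left].
have phiE : phi = -1 \/ phi = 1.
  rewrite /phi; case: sgzP FD0 => //; by [right | left].
have sg0 : sg != 0.
  by rewrite /sg intr_eq0 oppr_eq0 mulf_eq0; case: rhoE => ->; case: phiE => ->.
have SIGN : forall a a' b, a \in A -> a' \in A -> b \in A -> hZ h a = 0 -> hZ h a' = 0 ->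
    tau a < tau a' -> hZ h b != 0 -> 0 <= sg * det3 (f a) (f a') (f b).
  move=> a a' b aA a'A bA ha ha' taa hb.
  have hbp : 0 < hZ h b by rewrite lt_def hb hA.
  have Dn : det3 a a' b < 0.
    have := orient_det b ha ha'.
    move=> E; have : nrm h * det3 a a' b < 0.
      by rewrite E oppr_lt0 mulr_gt0 // subr_gt0.
    by rewrite pmulr_rlt0.
  have [K0|Kn] := eqVneq (det3 (f a) (f a') (f b)) 0; first by rewrite K0 mulr0.
  case: rhoE => rE.
    have sD : sgz (det3 a a' b) = sgz (det3 a0 a1 a2) by rewrite -/rho rE ltr0_sgz.
    have := WC a a' b aA a'A bA (negbT (lt_eqF Dn)) sD Kn.
    rewrite -/phi => sK.
    by rewrite /sg rE mulN1r opprK -sK sgz_mul_ge0.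
  have Dp : 0 < det3 a' a b by rewrite det3_swap oppr_gt0.
  have sD : sgz (det3 a' a b) = sgz (det3 a0 a1 a2) by rewrite -/rho rE gtr0_sgz.
  have Kn' : det3 (f a') (f a) (f b) != 0 by rewrite det3_swap oppr_eq0.
  have := WC a' a b a'A aA bA (negbT (gt_eqF Dp)) sD Kn'.
  rewrite -/phi det3_swap => sK.
  have := sgz_mul_ge0 (- det3 (f a) (f a') (f b)).
  by rewrite sK /sg rE mul1r rmorphN /= mulrN mulNr.
have SG0 : forall b, b \in A -> hZ h b != 0 -> forall a, a \in A -> hZ h a = 0 ->
    0 <= sg * det3 (f v0) (f a) (f b).
  move=> b bA bn a aA ha.
  have [e|ne] := eqVneq a v0; first by rewrite e det3_pp mulr0.
  apply: SIGN => //; rewrite lt_def v0m // andbT.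
  by apply/negP => /eqP e; move/eqP: ne; apply; apply: tauE.
have SG1 : forall b, b \in A -> hZ h b != 0 -> forall a, a \in A -> hZ h a = 0 ->
    0 <= sg * det3 (f a) (f v1) (f b).
  move=> b bA bn a aA ha.
  have [e|ne] := eqVneq a v1; first by rewrite e det3_pp mulr0.
  apply: SIGN => //; rewrite lt_def v1m // andbT.
  apply/negP => /eqP e; move/eqP: ne; apply.
  by apply: line_uniqZ N _ (esym e); rewrite ha hv1.
have COL : (forall b, b \in A -> hZ h b != 0 -> forall a, a \in A -> hZ h a = 0 ->
    det3 (f v0) (f a) (f b) = 0 /\ det3 (f a) (f v1) (f b) = 0) -> False.
  move=> K.
  have L : forall a, a \in A -> det3 (f v0) (f v1) (f a) = 0.
    move=> a aA.
    have [ha|ha] := eqVneq (hZ h a) 0; last by have [] := K a aA ha v1 v1A hv1.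
    have [K1 K2] := K b0 b0A b0n a aA ha.
    have [K3 _] := K b0 b0A b0n v1 v1A hv1.
    by rewrite (det3_four _ _ _ (f b0)) K3 K1 det3_swap K2 !subr0.
  move/eqP: FD0; apply.
  exact: det3_collinear fne (L a0 a0A) (L a1 a1A) (L a2 a2A).

have EDGE : forall z, in_edge A h z -> [/\ (tau v0)%:~R <= tauR z, tauR z <= (tau v1)%:~R
    & forall g, g \in H -> 0 <= hR g z].
  move=> z ez; split.
  - have := edge_nonneg (g := shf (dirf h) (- tau v0)) hA ez.
    rewrite hR_shf rmorphN /= -/(tauR z) => /(_ _).
    rewrite subr_ge0; apply => a aA ha; rewrite hZ_shf subr_ge0; exact: v0m.
  - have := edge_nonneg (g := shf (dirs (-1) h) (tau v1)) hA ez.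
    rewrite hR_shf hR_dirs -/(tauR z) => /(_ _).
    have -> : (-1)%:~R * tauR z + (tau v1)%:~R = (tau v1)%:~R - tauR z :> R.
      by rewrite rmorphN1 mulN1r addrC.
    rewrite subr_ge0; apply => a aA ha; rewrite hZ_shf hZ_dirs mulN1r addrC subr_ge0.
    exact: v1m.
  - move=> g gH; case: ez => ez _; apply: hull_nonneg ez _; exact: HA.
have at0 : forall z, in_edge A h z -> tauR z = (tau v0)%:~R -> z = toR v0.
  move=> z [_ hz] tz; apply: (line_uniqR N); first by rewrite hz hR_toR hv0.
  by rewrite hR_toR.
have at1 : forall z, in_edge A h z -> tauR z = (tau v1)%:~R -> z = toR v1.
  move=> z [_ hz] tz; apply: (line_uniqR N); first by rewrite hz hR_toR hv1.
  by rewrite hR_toR.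
have INT : forall z, in_edge A h z -> (tau v0)%:~R < tauR z -> tauR z < (tau v1)%:~R ->
    forall g, g \in H -> 0 < hR g z \/ (forall a, a \in A -> hZ h a = 0 -> hZ g a = 0).
  move=> z ez t0 t1 g gH.
  have [_ _ Gz] := EDGE z ez.
  have := Gz g gH; rewrite le_eqVlt => /orP [/eqP gz0|]; last by left.
  right.
  case: (ez) => _ hz.
  have E1 : hR h (toR v0 : R * R) = hR h z by rewrite hz hR_toR hv0.
  have E2 : hR h z = hR h (toR v1 : R * R) by rewrite hz hR_toR hv1.
  have K1 := KI g E1; have K2 := KI g E2.
  rewrite !hR_toR -gz0 -/(tauR z) in K1 K2.
  have gv0 : 0 <= (hZ g v0)%:~R :> R by rewrite ler0z HA.
  have gv1 : 0 <= (hZ g v1)%:~R :> R by rewrite ler0z HA.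
  set L := (lg g h)%:~R : R in K1 K2.
  set Nn := (nrm h)%:~R : R in K1 K2 NR.
  have Lle : L <= 0 by nra.
  have Lge : 0 <= L by nra.
  have L0 : L = 0 by apply/eqP; rewrite eq_le Lle Lge.
  have G0 : (hZ g v0)%:~R = 0 :> R.
    by move: K1; rewrite L0 mulr0 sub0r mulrN => /eqP; rewrite oppr_eq0 mulf_eq0 gt_eqF //= => /eqP.
  move=> a aA ha.
  have K3 := KIZ g (etrans hv0 (esym ha)).
  move/eqP: L0; rewrite /L intr_eq0 => /eqP L0.
  move/eqP: G0; rewrite intr_eq0 => /eqP G0.
  by move: K3; rewrite L0 G0 mulr0 subr0 => /eqP; rewrite mulf_eq0 (gt_eqF N) /= => /eqP.
have POSI : forall z, in_edge A h z -> (tau v0)%:~R < tauR z -> tauR z < (tau v1)%:~R ->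
    forall a, a \in A -> hZ h a = 0 -> 0 < bernstein H a z.
  move=> z ez t0 t1 a aA ha; apply: bern_pos => g gH.
  by case: (INT z ez t0 t1 g gH) => [|K]; [left | right; apply: K].
have g0z : forall z, in_edge A h z -> (tau v0)%:~R < tauR z -> tauR z < (tau v1)%:~R ->
    0 < hR g0 z.
  move=> z ez t0 t1; case: (INT z ez t0 t1 g0 g0H) => // K.
  have := g0pos v1 v1A hv1; rewrite eq_sym nv01 => /(_ isT).
  by rewrite K // ltxx.
have lg0 : lg g0 h != 0.
  apply/negP => /eqP L0.
  have := KIZ g0 (etrans hv0 (esym hv1)); rewrite L0 mulr0 g0v0 subr0 => /eqP.
  rewrite mulf_eq0 (gt_eqF N) /= => /eqP G.
  have := g0pos v1 v1A hv1; rewrite eq_sym nv01 => /(_ isT).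
  by rewrite G ltxx.
have PV0 : patch A H f w (toR v0) = f v0.
  apply: (patch_vertex f uA v0A (wpos v0 v0A)).
    by apply: (@bern_self R H v0) => g gH; exact: (HA g gH v0 v0A).
  move=> a aA na.
  have [ha|ha] := eqVneq (hZ h a) 0.
    apply: (bern_zero g0H); first by rewrite hR_toR g0v0.
    by rewrite gt_eqF // g0pos.
  by apply: (bern_zero hH) => //; rewrite hR_toR hv0.
have PV1 : patch A H f w (toR v1) = f v1.
  apply: (patch_vertex f uA v1A (wpos v1 v1A)).
    by apply: (@bern_self R H v1) => g gH; exact: (HA g gH v1 v1A).
  move=> a aA na.
  have [ha|ha] := eqVneq (hZ h a) 0.
    apply: (bern_zero g1H); first by rewrite hR_toR g1v1.
    by rewrite gt_eqF // g1pos.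
  by apply: (bern_zero hH) => //; rewrite hR_toR hv1.
have CWnn : forall z, in_edge A h z -> forall a, a \in A -> 0 <= cw H w z a.
  move=> z ez a aA; have [_ _ Gz] := EDGE z ez.
  by rewrite /cw; apply: mulr_ge0; [exact: ltW (wpos a aA) | exact: bern_nn].
have CW0 : forall z, in_edge A h z -> forall a, hZ h a != 0 -> cw H w z a = 0.
  move=> z [_ hz] a ha; by rewrite /cw (bern_zero hH hz ha) mulr0.
have CWpos : forall z, in_edge A h z -> (tau v0)%:~R < tauR z -> tauR z < (tau v1)%:~R ->
    forall a, a \in A -> hZ h a = 0 -> 0 < cw H w z a.
  move=> z ez t0 t1 a aA ha; by rewrite /cw mulr_gt0 ?wpos ?POSI.
have Npos : forall z, in_edge A h z -> (tau v0)%:~R < tauR z -> tauR z < (tau v1)%:~R ->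
    0 < \sum_(a <- A) cw H w z a.
  move=> z ez t0 t1; apply: (sum_pos uA (CWnn z ez) v0A); exact: CWpos.
have TERM : forall z, in_edge A h z -> forall G : lattice -> R,
    (forall a, a \in A -> hZ h a = 0 -> 0 <= sg * G a) ->
    forall a, a \in A -> 0 <= sg * (cw H w z a * G a).
  move=> z ez G HG a aA.
  have [ha|ha] := eqVneq (hZ h a) 0; last by rewrite CW0 // mul0r mulr0.
  by rewrite mulrCA mulr_ge0 ?CWnn ?HG.

have MAIN : forall x y, in_edge A h x -> in_edge A h y ->
    patch A H f w x = patch A H f w y -> tauR x < tauR y -> False.
  move=> x y ex ey Fxy txy.
  have [x0 x1 Gx] := EDGE x ex.
  have [y0 y1 Gy] := EDGE y ey.
  have [_ hx0] := ex; have [_ hy0] := ey.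
  move: x0 y1; rewrite !le_eqVlt => /orP [/eqP ex0|lx0] /orP [/eqP ey1|ly1].
  - move: Fxy; rewrite (at0 x ex (esym ex0)) (at1 y ey ey1) PV0 PV1 => E.
    by move/eqP: fne.
  - have iy0 : (tau v0)%:~R < tauR y by rewrite ex0.
    have Fy : patch A H f w y = f v0 by rewrite -Fxy (at0 x ex (esym ex0)) PV0.
    apply: COL => b bA bn.
    have S1 := sum_det_patch (f b) (f v0) (Npos y ey iy0 ly1) Fy.
    rewrite det3_pqp mulr0 in S1.
    have K1 : forall a, a \in A -> hZ h a = 0 -> det3 (f v0) (f a) (f b) = 0.
      move=> a aA ha; rewrite det3_cyc.
      apply: (zero_terms sg0 _ S1 aA); last by rewrite gt_eqF // CWpos.
      apply: (TERM y ey (fun a => det3 (f a) (f b) (f v0))) => a' a'A ha'.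
      by rewrite -det3_cyc; apply: SG0.
    have S2 := sum_det_patch (f v1) (f b) (Npos y ey iy0 ly1) Fy.
    rewrite K1 // mulr0 in S2.
    move=> a aA ha; split; first exact: K1.
    apply: (zero_terms sg0 _ S2 aA); last by rewrite gt_eqF // CWpos.
    apply: (TERM y ey (fun a => det3 (f a) (f v1) (f b))) => a' a'A ha'.
    exact: SG1.
  - have ix1 : tauR x < (tau v1)%:~R by rewrite -ey1.
    have Fx : patch A H f w x = f v1 by rewrite Fxy (at1 y ey ey1) PV1.
    apply: COL => b bA bn.
    have S1 := sum_det_patch (f v1) (f b) (Npos x ex lx0 ix1) Fx.
    rewrite det3_pp mulr0 in S1.
    have K2 : forall a, a \in A -> hZ h a = 0 -> det3 (f a) (f v1) (f b) = 0.
      move=> a aA ha.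
      apply: (zero_terms sg0 _ S1 aA); last by rewrite gt_eqF // CWpos.
      apply: (TERM x ex (fun a => det3 (f a) (f v1) (f b))) => a' a'A ha'.
      exact: SG1.
    have S2 := sum_det_patch (f b) (f v0) (Npos x ex lx0 ix1) Fx.
    rewrite -det3_cyc K2 // mulr0 in S2.
    move=> a aA ha; split; last exact: K2.
    rewrite det3_cyc.
    apply: (zero_terms sg0 _ S2 aA); last by rewrite gt_eqF // CWpos.
    apply: (TERM x ex (fun a => det3 (f a) (f b) (f v0))) => a' a'A ha'.
    by rewrite -det3_cyc; apply: SG0.
  - have ix1 : tauR x < (tau v1)%:~R := lt_trans txy ly1.
    have iy0 : (tau v0)%:~R < tauR y := lt_trans lx0 txy.
    set P := patch A H f w y.
    pose cx := cw H w x; pose cy := cw H w y.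
    have Nx := Npos x ex lx0 ix1; have Ny := Npos y ey iy0 ly1.
    have TNN : forall a a', a \in A -> a' \in A -> hZ h a = 0 -> hZ h a' = 0 ->
        tau a <= tau a' -> 0 <= cx a * cy a' - cx a' * cy a.
      move=> a a' aA a'A ha ha' ta.
      have -> : cx a * cy a' - cx a' * cy a = w a * w a' *
        (bernstein H a x * bernstein H a' y - bernstein H a' x * bernstein H a y).
        by rewrite /cx /cy /cw; ring.
      apply: mulr_ge0; first by rewrite mulr_ge0 // ltW // wpos.
      rewrite subr_ge0.
      apply: (bern_cmp N ha ha' hx0 hy0) => //.
        by move=> g gH; split; apply: HA.
        by move=> g gH; split; [apply: Gx | apply: Gy].
      exact: ltW.
    have TPOS : forall a a', a \in A -> a' \in A -> hZ h a = 0 -> hZ h a' = 0 ->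
        tau a < tau a' -> 0 < cx a * cy a' - cx a' * cy a.
      move=> a a' aA a'A ha ha' ta.
      have -> : cx a * cy a' - cx a' * cy a = w a * w a' *
        (bernstein H a x * bernstein H a' y - bernstein H a' x * bernstein H a y).
        by rewrite /cx /cy /cw; ring.
      apply: mulr_gt0; first by rewrite mulr_gt0 // wpos.
      rewrite subr_gt0.
      apply: (bern_cmp_lt uH g0H lg0 (g0z x ex lx0 ix1) (g0z y ey iy0 ly1) N ha ha' hx0 hy0) => //.
      - by move=> g gH; split; apply: HA.
      - by move=> g gH; split; [apply: Gx | apply: Gy].
      - exact: POSI.
      - exact: POSI.
    apply: COL => b bA bn.
    pose K a a' := det3 (f a) (f a') (f b).
    pose Tm a a' := (cx a * cy a' - cx a' * cy a) * K a a'.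
    have I1 : forall a, \sum_(a' <- A) cy a' * det3 (f a') (f b) (f a) =
        (\sum_(a' <- A) cy a') * det3 (f a) P (f b).
      move=> a; rewrite (sum_det_patch (f b) (f a) Ny (erefl P)).
      by rewrite [det3 (f a) P (f b)]det3_cyc.
    have I2 : \sum_(a <- A) cx a * det3 (f a) P (f b) = 0.
      by rewrite (sum_det_patch P (f b) Nx Fxy) det3_pp mulr0.
    have DS : \sum_(a <- A) \sum_(a' <- A) cx a * cy a' * K a a' = 0.
      transitivity (\sum_(a <- A) cx a * (\sum_(a' <- A) cy a' * det3 (f a') (f b) (f a))).
        apply: eq_bigr => a _; rewrite mulr_sumr; apply: eq_bigr => a' _.
        by rewrite /K det3_cyc mulrA.
      under eq_bigr => a _ do rewrite I1 mulrCA.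
      by rewrite -mulr_sumr I2 mulr0.
    have DS' : \sum_(a <- A) \sum_(a' <- A) cx a' * cy a * K a a' = 0.
      rewrite exchange_big /=.
      transitivity (- \sum_(a <- A) \sum_(a' <- A) cx a * cy a' * K a a'); last first.
        by rewrite DS oppr0.
      rewrite -sumrN; apply: eq_bigr => i _; rewrite -sumrN; apply: eq_bigr => j _.
      by rewrite /K det3_swap mulrN.
    have SS : \sum_(a <- A) \sum_(a' <- A) sg * Tm a a' = 0.
      transitivity (sg * \sum_(a <- A) (\sum_(a' <- A) cx a * cy a' * K a a' -
                                        \sum_(a' <- A) cx a' * cy a * K a a')).
        rewrite mulr_sumr; apply: eq_bigr => a _; rewrite -sumrB mulr_sumr.
        by apply: eq_bigr => a' _; rewrite /Tm; ring.
      by rewrite sumrB DS DS' subr0 mulr0.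
    have TMnn : forall a a', a \in A -> a' \in A -> 0 <= sg * Tm a a'.
      move=> a a' aA a'A; rewrite /Tm.
      have [ha|ha] := eqVneq (hZ h a) 0; last first.
        by rewrite /cx /cy !(CW0 _ _ _ ha) // !mul0r !mulr0 subrr mul0r mulr0.
      have [ha'|ha'] := eqVneq (hZ h a') 0; last first.
        by rewrite /cx /cy !(CW0 _ _ _ ha') // !mul0r !mulr0 subrr mul0r mulr0.
      case: (ltgtP (tau a) (tau a')) => [lt|gt|eq].
      - rewrite mulrCA; apply: mulr_ge0; first exact: (TNN a a' aA a'A ha ha' (ltW lt)).
        exact: (SIGN a a' b aA a'A bA ha ha' lt bn).
      - rewrite /K -[det3 (f a) (f a') (f b)]opprK -det3_swap.
        have -> : (cx a * cy a' - cx a' * cy a) = - (cx a' * cy a - cx a * cy a') by rewrite opprB.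
        rewrite mulrNN mulrCA; apply: mulr_ge0; first exact: (TNN a' a a'A aA ha' ha (ltW gt)).
        exact: (SIGN a' a b a'A aA bA ha' ha gt bn).
      - have -> : a = a' by apply: line_uniqZ N _ eq; rewrite ha ha'.
        by rewrite /K det3_pp !mulr0.
    have ALL : forall a a', a \in A -> a' \in A -> sg * Tm a a' = 0.
      move=> a a' aA a'A.
      have inner : forall a, a \in A -> \sum_(a' <- A) sg * Tm a a' = 0.
        apply: (sum0_nn _ SS) => i iA; rewrite big_seq sumr_ge0 // => j jA; exact: TMnn.
      by apply: (sum0_nn _ (inner a aA)) a'A => j jA; exact: TMnn.
    move=> a aA ha; split.
      have [e|ne] := eqVneq a v0; first by rewrite e det3_pp.
      have ta : tau v0 < tau a.
        rewrite lt_def v0m // andbT; apply/negP => /eqP e.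
        by move/eqP: ne; apply; apply: tauE.
      have := ALL v0 a v0A aA; rewrite /Tm => /eqP.
      by rewrite !mulf_eq0 (negPf sg0) (gt_eqF (TPOS _ _ v0A aA hv0 ha ta)) /= => /eqP.
    have [e|ne] := eqVneq a v1; first by rewrite e det3_pp.
    have ta : tau a < tau v1.
      rewrite lt_def v1m // andbT; apply/negP => /eqP e.
      move/eqP: ne; apply; by apply: line_uniqZ N _ (esym e); rewrite ha hv1.
    have := ALL a v1 aA v1A; rewrite /Tm => /eqP.
    by rewrite !mulf_eq0 (negPf sg0) (gt_eqF (TPOS _ _ aA v1A ha hv1 ta)) /= => /eqP.
move=> x y ex ey Fxy.
case: (ltgtP (tauR x) (tauR y)) => [lt|gt|eq].
- by exfalso; exact: MAIN x y ex ey Fxy lt.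
- by exfalso; exact: MAIN y x ey ex (esym Fxy) gt.
- apply: (line_uniqR N) eq.
  by case: ex => _ ->; case: ey => _ ->.
Qed.
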